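(* Let $n\ge3$ with $n\equiv 3\pmod 4$ and let $D_{2n}=\langle a,b\mid a^n=b^2=1,\ ba=a^{-1}b\rangle$ be the dihedral group of order $2n$. Then the sequence $S=a^{[(n-1)/2]}\boldsymbol{\cdot}b^{[2]}$ lies in $\mathsf q(\mathcal B(D_{2n}))\setminus\mathcal B(D_{2n})$ while $S^{[2]},S^{[3]}\in\mathcal B(D_{2n})$; consequently, if a finite group $G$ contains a subgroup isomorphic to $D_{2n}$, then $\mathcal B(G)$ is not seminormal.
   Context: For a finite group $G$ (multiplicative, identity $1_G$) and $G_0\subset G$, $\mathcal F(G_0)$ is the free abelian monoid with basis $G_0$ (sequences $S=g_1\boldsymbol{\cdot}\ldots\boldsymbol{\cdot}g_\ell$, operation $\boldsymbol{\cdot}$ = concatenation; $g^{[k]}$ and $S^{[k]}$ denote $k$-fold products). $\pi(S)=\{g_{\tau(1)}\cdots g_{\tau(\ell)}:\tau\text{ a permutation of }[1,\ell]\}$ and $\mathcal B(G_0)=\{S\in\mathcal F(G_0):1_G\in\pi(S)\}$. $\mathsf q(H)$ is the quotient group of a monoid $H$. A monoid $H$ is seminormal if $x\in\mathsf q(H)$ and $x^2,x^3\in H$ imply $x\in H$. *)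

(* Defs.v *)
From HB Require Import structures.
From mathcomp Require Import all_boot all_order all_algebra all_fingroup.
Set Implicit Arguments. Unset Strict Implicit. Unset Printing Implicit Defensive.
Import GRing.Theory.

(* Sequences over a finite group: an element S of the free abelian monoid
   F(gT) is represented by its multiplicity function S : {ffun gT -> nat}.
   Concatenation is pointwise addition. *)
Definition fseq (gT : finGroupType) := {ffun gT -> nat}.

Definition seq_mul (gT : finGroupType) (S1 S2 : fseq gT) : fseq gT :=
  [ffun g => (S1 g + S2 g)%N].

Definition seq_pow1 (gT : finGroupType) (x : gT) (k : nat) : fseq gT :=
  [ffun g => ((g == x) * k)%N].

Definition seq_rep (gT : finGroupType) (k : nat) (S : fseq gT) : fseq gT :=
  [ffun g => (k * S g)%N].

Definition in_F (gT : finGroupType) (G0 : {set gT}) (S : fseq gT) : Prop :=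
  forall g, S g != 0%N -> g \in G0.

(* x \in pi(S): x is the product of the terms of S in some order, i.e. the
   product of some list s whose multiset of terms is S. *)
Definition in_pi (gT : finGroupType) (S : fseq gT) (x : gT) : Prop :=
  exists s : seq gT, (forall g, count_mem g s = S g) /\ (\prod_(y <- s) y)%g = x.

Definition in_B (gT : finGroupType) (G0 : {set gT}) (S : fseq gT) : Prop :=
  in_F G0 S /\ in_pi S 1%g.

(* The quotient group q(F(gT)) is the free abelian group Z^(gT), represented
   by functions gT -> int; F(gT) embeds via S |-> (g |-> S g). *)
Definition embZ (gT : finGroupType) (S : fseq gT) : gT -> int :=
  fun g => Posz (S g).

Definition in_BZ (gT : finGroupType) (G0 : {set gT}) (x : gT -> int) : Prop :=
  exists A : fseq gT, in_B G0 A /\ forall g, x g = Posz (A g).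

Definition in_qB (gT : finGroupType) (G0 : {set gT}) (x : gT -> int) : Prop :=
  exists A B : fseq gT, [/\ in_B G0 A, in_B G0 B &
    forall g, x g = (Posz (A g) - Posz (B g))%R].

(* B(G0) is seminormal: x \in q(B), x^2, x^3 \in B imply x \in B
   (written additively in Z^(gT)). *)
Definition B_seminormal (gT : finGroupType) (G0 : {set gT}) : Prop :=
  forall x : gT -> int, in_qB G0 x ->
    in_BZ G0 (fun g => (x g *+ 2)%R) -> in_BZ G0 (fun g => (x g *+ 3)%R) ->
    in_BZ G0 x.

Definition dihedral_gens (gT : finGroupType) (n : nat) (a b : gT) : Prop :=
  [/\ (a ^+ n = 1)%g, (b ^+ 2 = 1)%g, (b * a = a^-1 * b)%g &
      #|<<[set a; b]>>%g| = (2 * n)%N].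

(* Main.v *)
Require Import Defs.
From mathcomp Require Import all_boot all_order all_algebra all_fingroup.
From mathcomp Require Import cyclic zify.
Set Implicit Arguments. Unset Strict Implicit. Unset Printing Implicit Defensive.

Open Scope group_scope.

Lemma bak (gT : finGroupType) (a b : gT) : b * a = a^-1 * b ->
  forall k, b * a ^+ k = (a ^+ k)^-1 * b.
Proof.
move=> h; elim=> [|k IH]; first by rewrite expg0 invg1 mulg1 mul1g.
by rewrite {1}expgSr mulgA IH -mulgA h expgS invMg !mulgA.
Qed.

Lemma bak' (gT : finGroupType) (a b : gT) : b * a = a^-1 * b ->
  forall k, b * (a ^+ k)^-1 = a ^+ k * b.
Proof.
move=> h k; set y := a ^+ k.
by rewrite -{2}(mulgK y b) /y bak // !mulgA mulgV mul1g.
Qed.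

Lemma prod_nseq (gT : finGroupType) (a : gT) k :
  \prod_(y <- nseq k a) y = a ^+ k.
Proof. by elim: k => [|k IH]; rewrite ?big_nil ?big_cons ?IH ?expgS. Qed.

Lemma prod_ab (gT : finGroupType) (a b : gT) : b * a = a^-1 * b -> a != b ->
  forall s : seq gT, all (fun x => (x == a) || (x == b)) s ->
  exists p q, (p + q = count_mem a s)%N /\
     \prod_(y <- s) y = a ^+ p * (a ^+ q)^-1 * b ^+ (count_mem b s).
Proof.
move=> h ab; elim=> [|x s IH] /=.
  by move=> _; exists 0%N, 0%N; rewrite big_nil !expg0 invg1 !mulg1.
case/andP=> /orP [] /eqP -> /IH [p [q [e1 e2]]]; rewrite big_cons e2.
  exists p.+1, q; rewrite eqxx (negbTE (ab : a != b)) /=; split; first by rewrite -e1.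
  by rewrite add0n expgS !mulgA.
exists q, p; rewrite eqxx eq_sym (negbTE ab) /=; split; first by rewrite add0n addnC.
rewrite !mulgA (bak h p) -(mulgA _ b) (bak' h q) !mulgA.
have c : commute (a ^+ p)^-1 (a ^+ q).
  apply/commute_sym/commuteV/commuteX2/commute_refl.
by rewrite -c -!mulgA expgS.
Qed.

Lemma ord_a (gT : finGroupType) (n : nat) (a b : gT) : (0 < n)%N ->
  dihedral_gens n a b -> #[a] = n.
Proof.
move=> n0 [han hb2 hba hcard].
have dv : (#[a] %| n)%N by rewrite order_dvdn han.
have binv : b^-1 = b by rewrite -[b^-1]mulg1 -hb2 expgS expg1 mulgA mulVg mul1g.
have nb : b \in 'N(<[a]>).
  apply/normP; rewrite -cycleJ -cycleV; congr (<[_]>).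
  by rewrite /conjg binv mulgA hba -mulgA -[b * b]/(b ^+ 2) hb2 mulg1 invgK.
have le : (#|<<[set a; b]>>| <= #[a] * 2)%N.
  have sub : <<[set a; b]>> \subset (<[a]> <*> <[b]>)%G.
    rewrite gen_subG; apply/subsetP=> x; rewrite !inE => /orP [] /eqP ->.
      by apply: (subsetP (joing_subl _ _)); apply: cycle_id.
    by apply: (subsetP (joing_subr _ _)); apply: cycle_id.
  apply: leq_trans (subset_leq_card sub) _.
  rewrite /= norm_joinEr ?cycle_subG //.
  have := mul_cardG <[a]> <[b]>.
  have ob : (#[b] <= 2)%N by apply: dvdn_leq => //; rewrite order_dvdn hb2.
  have i0 : (0 < #|<[a]> :&: <[b]>|)%N by apply/card_gt0P; exists 1; rewrite inE !group1.
  move=> e; apply: leq_trans (leq_mul (leqnn _) ob).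
  rewrite /order e; apply: leq_pmulr i0.
apply/eqP; rewrite eqn_leq dvdn_leq //=.
rewrite hcard in le; lia.
Qed.

Definition SS (gT : finGroupType) n (a b : gT) :=
  seq_mul (seq_pow1 a ((n - 1) %/ 2)) (seq_pow1 b 2).

Lemma a_neq_b (gT : finGroupType) (n : nat) (a b : gT) : (3 <= n)%N ->
  dihedral_gens n a b -> a != b.
Proof.
move=> n3 dg; have oa := ord_a (leq_trans (isT : (0 < 3)%N) n3) dg.
case: dg => _ hb2 _ _; apply/eqP => eab; subst b.
have : (#[a] %| 2)%N by rewrite order_dvdn hb2.
by move/dvdn_leq => /(_ isT); rewrite oa; lia.
Qed.

Lemma SSE (gT : finGroupType) n (a b : gT) g :
  SS n a b g = ((g == a) * ((n - 1) %/ 2) + (g == b) * 2)%N.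
Proof. by rewrite /SS /seq_mul /seq_pow1 !ffunE. Qed.

Lemma notpi (gT : finGroupType) (n : nat) (a b : gT) : (3 <= n)%N -> n %% 4 = 3 ->
  dihedral_gens n a b -> ~ in_pi (SS n a b) 1.
Proof.
move=> n3 n4 dg; have oa := ord_a (leq_trans (isT : (0 < 3)%N) n3) dg.
have ab := a_neq_b n3 dg.
case: (dg) => han hb2 hba _.
case=> s [hc hp].
have al : all (fun x => (x == a) || (x == b)) s.
  apply/allP=> x xs; have := hc x; rewrite SSE.
  case: (x == a) => //; case: (x == b) => // /=.
  by move/count_memPn; rewrite xs.
have ca : count_mem a s = ((n - 1) %/ 2)%N by rewrite hc SSE eqxx (negbTE ab) /= mul1n mul0n addn0.
have cb : count_mem b s = 2%N by rewrite hc SSE eqxx eq_sym (negbTE ab) /= mul0n.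
have [p [q [e1 e2]]] := prod_ab hba ab al.
rewrite e2 cb hb2 mulg1 in hp.
have : a ^+ p == a ^+ q by rewrite eq_mulgV1 hp.
rewrite eq_expg_mod_order oa !modn_small; first (move/eqP; lia).
- lia.
- lia.
Qed.

Lemma pi2 (gT : finGroupType) (n : nat) (a b : gT) : (3 <= n)%N ->
  dihedral_gens n a b -> in_pi (seq_rep 2 (SS n a b)) 1.
Proof.
move=> n3 dg; have ab := a_neq_b n3 dg.
case: (dg) => han hb2 hba _.
set m := ((n - 1) %/ 2)%N.
exists (nseq m a ++ b :: nseq m a ++ [:: b; b; b]); split.
  move=> g; rewrite /seq_rep ffunE SSE -/m !count_cat /= !count_cat /= !count_nseq /=.
  rewrite !(eq_sym a g) !(eq_sym b g).
  case ga: (g == a); case gb: (g == b); rewrite /=; lia.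
rewrite big_cat big_cons big_cat !big_cons big_nil !prod_nseq /=.
rewrite mulg1 [b * (a ^+ m * _)]mulgA (bak hba) -mulgA mulKVg.
by rewrite !mulgA -[b * b]/(b ^+ 2) hb2 mul1g -[b * b]/(b ^+ 2) hb2.
Qed.

Lemma pi3 (gT : finGroupType) (n : nat) (a b : gT) : (3 <= n)%N -> n %% 4 = 3 ->
  dihedral_gens n a b -> in_pi (seq_rep 3 (SS n a b)) 1.
Proof.
move=> n3 n4 dg.
case: (dg) => han hb2 hba _.
set k := (n %/ 4)%N.
have hn : n = (4 * k + 3)%N by rewrite /k; lia.
exists (nseq (5 * k + 3) a ++ b :: nseq k a ++ nseq 5 b); split.
  move=> g; rewrite /seq_rep ffunE SSE !count_cat /= !count_cat /= !count_nseq /=.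
  rewrite !(eq_sym a g) !(eq_sym b g).
  case ga: (g == a); case gb: (g == b); rewrite /=; lia.
rewrite big_cat big_cons big_cat !prod_nseq /=.
rewrite [b * (a ^+ k * _)]mulgA (bak hba) !mulgA.
have -> : (5 * k + 3 = k + n)%N by lia.
rewrite expgD han mulg1 mulgV mul1g.
by rewrite -[b * b]/(b ^+ 2) hb2 mul1g -[b * b]/(b ^+ 2) hb2 mul1g -[b * b]/(b ^+ 2) hb2.
Qed.

Lemma inF_rep (gT : finGroupType) n (a b : gT) (G0 : {set gT}) k :
  a \in G0 -> b \in G0 -> in_F G0 (seq_rep k (SS n a b)).
Proof.
move=> aG bG g; rewrite ffunE SSE.
case: (g =P a) => [->//|_]; case: (g =P b) => [->//|_].
by rewrite /= !mul0n muln0.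
Qed.

Theorem mainTheorem9 (n : nat) (hn3 : (3 <= n)%N) (hn4 : n %% 4 = 3) :
  (forall (gT : finGroupType) (a b : gT), dihedral_gens n a b ->
     let D := <<[set a; b]>>%g in
     let S := seq_mul (seq_pow1 a ((n - 1) %/ 2)) (seq_pow1 b 2) in
     [/\ in_qB D (embZ S), ~ in_B D S, in_B D (seq_rep 2 S) &
         in_B D (seq_rep 3 S)])
  /\
  (forall (gT : finGroupType) (G : {group gT}),
     (exists (H : {group gT}) (a b : gT),
        [/\ H \subset G, H = <<[set a; b]>>%G :> {set gT} & dihedral_gens n a b]) ->
     ~ B_seminormal G).
Proof.
split.
  move=> gT a b dg D S.
  have aD : a \in D by rewrite mem_gen // !inE eqxx.
  have bD : b \in D by rewrite mem_gen // !inE eqxx orbT.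
  have B2 : in_B D (seq_rep 2 S) by split; [apply: inF_rep | apply: pi2].
  have B3 : in_B D (seq_rep 3 S) by split; [apply: inF_rep | apply: pi3].
  split => //.
    exists (seq_rep 3 S), (seq_rep 2 S); split => // g.
    rewrite /embZ !ffunE; lia.
  by case=> _; apply: notpi.
move=> gT G [H [a [b [sub eqH dg]]]] hsn.
have aG : a \in G by apply: (subsetP sub); rewrite eqH mem_gen // !inE eqxx.
have bG : b \in G by apply: (subsetP sub); rewrite eqH mem_gen // !inE eqxx orbT.
set S := SS n a b.
have B2 : in_B G (seq_rep 2 S) by split; [apply: inF_rep | apply: pi2].
have B3 : in_B G (seq_rep 3 S) by split; [apply: inF_rep | apply: pi3].
have : in_BZ G (embZ S).
  apply: hsn.
  - exists (seq_rep 3 S), (seq_rep 2 S); split => // g.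
    rewrite /embZ !ffunE; lia.
  - exists (seq_rep 2 S); split => // g; rewrite /embZ !ffunE; lia.
  - exists (seq_rep 3 S); split => // g; rewrite /embZ !ffunE; lia.
case=> A [[_ [s [hc hp]]] eA].
apply: (notpi hn3 hn4 dg); exists s; split => // g.
by rewrite hc; case: (eA g).
Qed.
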